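(* Fix $N\ge1$ and an environment of order $N$ with mean matrix $\mathbf{M}=(M(i,j))_{i,j=1}^N$, $M(i,j)=j\,p_{ij}$, and macro mean matrix $\mathbf{M}_{macro}=(M_{macro}(i,j))$, $M_{macro}(i,j)=i\,p_{ij}=\frac{i}{j}M(i,j)$. Let $\rho$ be the Perron root of $\mathbf{M}$ and $\mathbf{u}=(u_1,\dots,u_N)$ the right eigenvector of $\mathbf{M}$ corresponding to $\rho$ with $u_1+\dots+u_N=1$. Then $\rho$ is the maximal in modulus eigenvalue of $\mathbf{M}_{macro}$, and the vector $\mathbf{U}=(U_1,\dots,U_N)$ with $$U_j=\frac{j\,u_j}{\sum_{k=1}^N k\,u_k},\quad j=1,\dots,N,$$ is a right eigenvector of $\mathbf{M}_{macro}$ corresponding to $\rho$.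
   Context: An environment of order $N$ is a tuple $\{P(i;\cdot),\ i=1,\dots,N\}$ where $P(i;\cdot)$ is a probability measure on $\{0,1,\dots,N\}^i$ invariant under permutations of coordinates; $p_{ij}=\sum_{k_2,\dots,k_i}P(i;(j,k_2,\dots,k_i))$ is the probability that a given member of a sibling group of size $i$ has exactly $j$ children. $\mathbf{M}$ is the mean matrix of the individual offspring laws (entries $j p_{ij}$), and $\mathbf{M}_{macro}$ is the mean matrix of the macro process whose $(i,j)$ entry is the expected number of size-$j$ sibling groups produced by one size-$i$ sibling group. The Perron root is the maximal-modulus eigenvalue of the nonnegative matrix $\mathbf{M}$. *)

(* Defs.v *)
From HB Require Import structures.
From mathcomp Require Import all_boot all_order all_fingroup all_algebra.
From mathcomp Require Import complex.
Set Implicit Arguments. Unset Strict Implicit. Unset Printing Implicit Defensive.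
Import Order.TTheory GRing.Theory Num.Theory.
Local Open Scope ring_scope.

(* Sibling-group sizes i = 1..N are encoded by i' : 'I_N with i = i'.+1;
   numbers of children j = 0..N are encoded by j : 'I_N.+1.
   An environment of order N: for each size i, a probability measure P(i;.)
   on {0,...,N}^i (as a finite function on i-tuples), invariant under
   permutations of coordinates. *)
Record environment (R : numDomainType) (N : nat) := Environment {
  envP : forall i : 'I_N, {ffun i.+1.-tuple 'I_N.+1 -> R};
  envP_ge0 : forall i t, 0 <= envP i t;
  envP_sum1 : forall i, \sum_t envP i t = 1;
  envP_perm : forall (i : 'I_N) (s : 'S_i.+1) (t : i.+1.-tuple 'I_N.+1),
      envP i [tuple tnth t (s k) | k < i.+1] = envP i t
}.

(* p_{ij}: probability that a given (the first) member of a sibling group of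
   size i.+1 has exactly j children. *)
Definition env_p (R : numDomainType) N (E : environment R N) (i : 'I_N)
  (j : 'I_N.+1) : R :=
  \sum_(t : i.+1.-tuple 'I_N.+1 | tnth t ord0 == j) envP E i t.

Definition meanM (R : numDomainType) N (E : environment R N) : 'M[R]_N :=
  \matrix_(i < N, j < N) ((j.+1)%:R * env_p E i (lift ord0 j)).

Definition meanMmacro (R : numDomainType) N (E : environment R N) : 'M[R]_N :=
  \matrix_(i < N, j < N) ((i.+1)%:R * env_p E i (lift ord0 j)).

Definition max_modulus_eigenvalue (R : rcfType) N (A : 'M[R]_N) (r : R) : Prop :=
  eigenvalue (map_mx (fun x : R => x%:C%C) A) r%:C%C /\
  forall z : R[i], eigenvalue (map_mx (fun x : R => x%:C%C) A) z -> `|z| <= `|r%:C%C|.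

Definition perron_root (R : rcfType) N (A : 'M[R]_N) (r : R) : Prop :=
  0 <= r /\ max_modulus_eigenvalue A r.

(* Main.v *)
Require Import Defs.
From HB Require Import structures.
From mathcomp Require Import all_boot all_order all_fingroup all_algebra.
From mathcomp Require Import complex.
Import Order.TTheory GRing.Theory Num.Theory.
Local Open Scope ring_scope.

Lemma eig_sim (F : fieldType) n (A B D : 'M[F]_n) a :
  D \in unitmx -> A *m D = D *m B -> eigenvalue A a -> eigenvalue B a.
Proof.
move=> uD eq /eigenvalueP [v Hv vn0]; apply/eigenvalueP; exists (v *m D).
  by rewrite -mulmxA -eq mulmxA Hv scalemxAl.
apply: contra vn0 => /eqP H.
by rewrite -[v]mulmx1 -(mulmxV uD) mulmxA H mul0mx.
Qed.

Arguments eig_sim {F n A B D a}.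

Lemma eig_sim_iff (F : fieldType) n (A B D : 'M[F]_n) a :
  D \in unitmx -> A *m D = D *m B -> eigenvalue A a = eigenvalue B a.
Proof.
move=> uD eq; apply/idP/idP; first exact: eig_sim eq.
apply: (@eig_sim _ _ B A (invmx D)); first by rewrite unitmx_inv.
have -> : B = invmx D *m A *m D by rewrite -mulmxA eq mulKmx.
by rewrite -[LHS]mulmxA mulmxV // mulmx1.
Qed.

Arguments eig_sim_iff {F n A B D} a.

Lemma macro_sim (R : rcfType) N (E : environment R N) :
  meanMmacro E *m diag_mx (\row_(j < N) (j.+1)%:R) =
  diag_mx (\row_(j < N) (j.+1)%:R) *m meanM E.
Proof.
rewrite mul_mx_diag mul_diag_mx; apply/matrixP => i j; rewrite !mxE.
by rewrite -mulrA [_ * j.+1%:R]mulrC.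
Qed.

Theorem lemma2 (R : rcfType) (N : nat) (hN : (1 <= N)%N)
  (E : environment R N) (rho : R) (u : 'cV[R]_N) :
  perron_root (meanM E) rho ->
  meanM E *m u = rho *: u ->
  (forall j, 0 <= u j ord0) ->
  \sum_(j < N) u j ord0 = 1 ->
  let U : 'cV[R]_N :=
    \col_(j < N) ((j.+1)%:R * u j ord0 / \sum_(k < N) (k.+1)%:R * u k ord0) in
  max_modulus_eigenvalue (meanMmacro E) rho /\
  U != 0 /\ meanMmacro E *m U = rho *: U.
Proof.
move=> [_ [Heig Hmax]] Hu u0 u1 U.
set d := \row_(j < N) ((j.+1)%:R : R).
have simC : map_mx (fun x : R => x%:C%C) (meanMmacro E) *m map_mx (fun x : R => x%:C%C) (diag_mx d)
   = map_mx (fun x : R => x%:C%C) (diag_mx d) *m map_mx (fun x : R => x%:C%C) (meanM E).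
  by rewrite -!map_mxM macro_sim.
have uDc : map_mx (fun x : R => x%:C%C) (diag_mx d) \in unitmx.
  rewrite map_unitmx unitmxE det_diag unitfE; apply/prodf_neq0 => i _.
  by rewrite mxE pnatr_eq0.
have eqv a := eig_sim_iff a uDc simC.
have s_gt0 : 0 < \sum_(k < N) (k.+1)%:R * u k ord0.
  apply: (lt_le_trans ltr01); rewrite -{1}u1; apply: ler_sum => k _.
  by rewrite -{1}[u k ord0]mul1r ler_wpM2r // ler1n.

split.
  split; first by rewrite eqv.
  by move=> z; rewrite eqv; apply: Hmax.
have UE : U = (\sum_(k < N) (k.+1)%:R * u k ord0)^-1 *: (diag_mx d *m u).
  apply/matrixP => i j; rewrite mul_diag_mx !mxE (ord1 j).
  by rewrite mulrC.
split.
  apply/negP => /eqP U0.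
  have : \sum_(j < N) u j ord0 = 0.
    apply: big1 => j _.
    have := congr1 (fun M : 'cV[R]_N => M j ord0) U0; rewrite /U !mxE => /eqP.
    rewrite mulf_eq0 invr_eq0 (gt_eqF s_gt0) orbF mulf_eq0 pnatr_eq0 /=.
    by move/eqP.
  by rewrite u1; move/eqP; rewrite oner_eq0.
rewrite UE -scalemxAr mulmxA macro_sim -mulmxA Hu -scalemxAr.
by rewrite scalerA mulrC -scalerA.
Qed.
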